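(* Let $m>1$ and let $\mathcal{H}=\sum_{j=1}^r\lambda_j[u_j^1,\ldots,u_j^m]_{\otimes h}$ with $0\neq\lambda_j\in\mathbb{R}$ and $u_j^i\in\mathbb{C}^{n_i}$. For each $i=1,\ldots,m$ let $U_i=\{u_1^i,\ldots,u_r^i\}$. If $k_{U_1}+\cdots+k_{U_m}\ge r+m$, then $\operatorname{hrank}(\mathcal{H})=r$ and the Hermitian rank decomposition of $\mathcal{H}$ is essentially unique, i.e. unique up to permutation of the terms and scaling of the decomposing vectors.
   Context: For $v_i\in\mathbb{C}^{n_i}$, $[v_1,\ldots,v_m]_{\otimes h}:=v_1\otimes\cdots\otimes v_m\otimes\overline{v_1}\otimes\cdots\otimes\overline{v_m}$. For a Hermitian tensor $\mathcal{H}$ (i.e. $\mathcal{H}\in\mathbb{C}^{n_1\times\cdots\times n_m\times n_1\times\cdots\times n_m}$ with $\mathcal{H}_{i_1\ldots i_m j_1\ldots j_m}=\overline{\mathcal{H}_{j_1\ldots j_m i_1\ldots i_m}}$), $\operatorname{hrank}(\mathcal{H})$ is the smallest $r$ with $\mathcal{H}=\sum_{i=1}^r\lambda_i[u_i^1,\ldots,u_i^m]_{\otimes h}$, $\lambda_i\in\mathbb{R}$, $u_i^j\in\mathbb{C}^{n_j}$; such a decomposition of minimal length is a Hermitian rank decomposition. For a finite set (list) $S$ of vectors, its Kruskal rank $k_S$ is the largest $k$ such that every subset of $k$ vectors of $S$ is linearly independent. *)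

(* Defs.v *)
From HB Require Import structures.
From mathcomp Require Import all_boot all_order all_algebra.
From mathcomp Require Import complex.
From mathcomp Require Import reals.
Set Implicit Arguments. Unset Strict Implicit. Unset Printing Implicit Defensive.
Import Order.TTheory GRing.Theory Num.Theory.
Local Open Scope ring_scope.
Local Open Scope complex_scope.

Section Hermitian.
Variables (R : realType) (m : nat) (n : 'I_m -> nat).
Local Notation C := (R[i]).

Definition mindex := forall k : 'I_m, 'I_(n k).

(* tensors in C^{n_1 x ... x n_m x n_1 x ... x n_m}: H a b = H_{a_1..a_m b_1..b_m} *)
Definition htensor := mindex -> mindex -> C.

Definition vtuple := forall k : 'I_m, 'rV[C]_(n k).

Definition hprod (v : vtuple) : htensor :=
  fun a b => \prod_(k < m) (v k 0 (a k) * Num.conj (v k 0 (b k))).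

Definition hsum (r : nat) (lam : 'I_r -> R) (u : 'I_r -> vtuple) : htensor :=
  fun a b => \sum_(j < r) (lam j)%:C * hprod (u j) a b.

Definition hermitian (H : htensor) : Prop :=
  forall a b, H a b = Num.conj (H b a).

Definition hdecomp (H : htensor) (r : nat) : Prop :=
  exists (lam : 'I_r -> R) (u : 'I_r -> vtuple), H = hsum lam u.

Definition hrank_is (H : htensor) (r : nat) : Prop :=
  hdecomp H r /\ forall r', hdecomp H r' -> (r <= r')%N.

End Hermitian.

Definition kruskal_rank (F : fieldType) (p r : nat) (v : 'I_r -> 'rV[F]_p) : nat :=
  \max_(k < r.+1 | [forall A : {set 'I_r}, (#|A| == k) ==> free [seq v j | j in A]]) k.

(* Main.v *)
Require Import Defs.
From HB Require Import structures.
From mathcomp Require Import all_boot all_order all_algebra.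
From mathcomp Require Import fingroup perm complex.
From mathcomp Require Import reals.
From mathcomp Require Import zify ring lra.
Import Order.TTheory GRing.Theory Num.Theory.
Local Open Scope ring_scope.
Local Open Scope complex_scope.
Set Implicit Arguments. Unset Strict Implicit.

Section Gen.
Variables (F : fieldType) (r : nat).

Definition ind N (f : 'I_r -> 'rV[F]_N) (T : {set 'I_r}) :=
  forall d : 'I_r -> F, \sum_(j in T) d j *: f j = 0 -> forall j, j \in T -> d j = 0.
Definition KR N (f : 'I_r -> 'rV[F]_N) k :=
  forall T : {set 'I_r}, (#|T| <= k)%N -> ind f T.

Lemma ind_sub N (f : 'I_r -> 'rV[F]_N) (T T' : {set 'I_r}) : T' \subset T -> ind f T -> ind f T'.
Proof.
move=> sT hT d hs j hj.
have := hT (fun j => if j \in T' then d j else 0) _ j (subsetP sT j hj).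
rewrite hj; apply.
transitivity (\sum_(j in T') d j *: f j); last exact: hs.
rewrite big_mkcond [RHS]big_mkcond /=; apply: eq_bigr => i _.
case: (boolP (i \in T')) => hi; first by rewrite (subsetP sT i hi).
by rewrite scale0r; case: (i \in T).
Qed.

Lemma KR_le N (f : 'I_r -> 'rV[F]_N) k k' : KR f k -> (k' <= k)%N -> KR f k'.
Proof. by move=> h hk T hT; apply: h; apply: leq_trans hk. Qed.

Definition Fm N (f : 'I_r -> 'rV[F]_N) (T1 : {set 'I_r}) : 'M[F]_(r, N) :=
  \matrix_j (if j \in T1 then f j else 0).

Lemma span_col N (p : 'rV[F]_N) (f : 'I_r -> 'rV[F]_N) (T1 : {set 'I_r}) (x : 'rV[F]_N) :
  (x <= col_mx p (Fm f T1))%MS ->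
  exists a c, x = a *: p + \sum_(j in T1) c j *: f j.
Proof.
case/submxP => D ->; rewrite -[D]hsubmxK mul_row_col.
exists (lsubmx D 0 0), (fun j => rsubmx D 0 j).
rewrite {1}[lsubmx D]mx11_scalar mul_scalar_mx mulmx_sum_row; congr (_ + _).
rewrite [RHS]big_mkcond /=; apply: eq_bigr => i _; rewrite rowK.
by case: (i \in T1); rewrite ?scaler0.
Qed.

Lemma core N (f g : 'I_r -> 'rV[F]_N) (p q : 'rV[F]_N) (T T1 : {set 'I_r}) (d : 'I_r -> F) (js : 'I_r) :
  (forall j, j \in T -> d j != 0) ->
  (forall y z, \sum_(j in T) d j * f j 0 y * g j 0 z = p 0 y * q 0 z) ->
  T1 \subset T -> js \in T -> js \notin T1 ->
  ~~ (f js <= col_mx p (Fm f T1))%MS ->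
  ind g (T :\: T1) -> False.
Proof.
move=> hd E sT hjs hjs1 hns hg.
set Z := cokermx (col_mx p (Fm f T1)).
have := mulmx_coker (col_mx p (Fm f T1)); rewrite -/Z mul_col_mx.
move/eqP; rewrite col_mx_eq0 => /andP[/eqP pZ /eqP FZ].
have fZ j : j \in T1 -> f j *m Z = 0.
  by move=> hj; have := congr1 (row j) FZ; rewrite row_mul rowK hj row0.
have : f js *m Z != 0 by rewrite -submxE.
case/rV0Pn => e he.
have key : \sum_(j in T :\: T1) (d j * (f j *m Z) 0 e) *: g j = 0.
  apply/rowP => z; rewrite summxE mxE.
  transitivity (\sum_(j in T) d j * (f j *m Z) 0 e * g j 0 z).
    rewrite [LHS]big_mkcond [RHS]big_mkcond /=; apply: eq_bigr => i _.
    rewrite inE; case: (boolP (i \in T1)) => hi /=.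
      by rewrite fZ // mxE mulr0 mul0r; case: (i \in T).
    by case: (i \in T) => //; rewrite mxE.
  transitivity (\sum_y Z y e * (p 0 y * q 0 z)).
    under eq_bigr => j _ do rewrite mxE mulr_sumr mulr_suml.
    rewrite exchange_big /=; apply: eq_bigr => y _; rewrite -E mulr_sumr.
    by apply: eq_bigr => j _; ring.
  apply: (@etrans _ _ ((p *m Z) 0 e * q 0 z)); last by rewrite pZ mxE mul0r.
  rewrite mxE mulr_suml; apply: eq_bigr => y _; ring.
have := hg _ key js; rewrite inE hjs hjs1 => /(_ isT) /eqP.
by rewrite mulf_eq0 (negPf he) (negPf (hd _ hjs)).
Qed.


Lemma sub_card (I : finType) (A : {set I}) k :
  (k <= #|A|)%N -> exists B : {set I}, B \subset A /\ #|B| = k.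
Proof.
elim: k => [|k IH] hk; first by exists set0; rewrite sub0set cards0.
have [B [sB cB]] := IH (ltnW hk).
have : (0 < #|A :\: B|)%N by rewrite cardsD (setIidPr sB) cB; lia.
case/card_gt0P => x; rewrite inE => /andP [hxB hxA].
exists (x |: B); rewrite subUset sub1set hxA sB cardsU1 hxB cB; split => //.
Qed.

Lemma lemA N (f g : 'I_r -> 'rV[F]_N) ka kb (T : {set 'I_r}) (d : 'I_r -> F) :
  KR f ka -> KR g kb -> (0 < ka)%N -> (0 < kb)%N -> (#|T| <= ka + kb - 1)%N ->
  (forall j, j \in T -> d j != 0) ->
  (forall y z, \sum_(j in T) d j * f j 0 y * g j 0 z = 0) -> T = set0.
Proof.
move=> hf hg ka0 kb0 hT hd E.
apply/eqP; apply/negPn/negP => /set0Pn [j0 hj0].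
have hc : (minn ka.-1 #|T|.-1 <= #|T :\ j0|)%N.
  by have := cardsD1 j0 T; rewrite hj0; lia.
have [T1 [sT1 cT1]] := sub_card hc.
have j0T1 : j0 \notin T1 by apply/negP => /(subsetP sT1); rewrite !inE eqxx.
have sT1T : T1 \subset T by apply: subset_trans sT1 (subD1set T j0).
apply: (core (f := f) (g := g) (p := 0) (q := 0) hd _ sT1T hj0 j0T1 _ (hg _ _)).
- by move=> y z; rewrite E mxE mul0r.
- apply/negP => /span_col [a [c hx]].
  have hi := hf (j0 |: T1) _ (fun j => if j == j0 then 1 else - c j) _ j0 (setU11 _ _).
  move: hi; rewrite eqxx => hi; suff : (1:F) = 0 by move/eqP; rewrite oner_eq0.
  apply: hi.
    by rewrite cardsU1 j0T1 cT1; lia.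
  rewrite big_setU1 //= eqxx scale1r hx scaler0 add0r -big_split /=.
  apply: big1 => j hj.
  have -> : (j == j0) = false by apply/negP => /eqP e; rewrite -e hj in j0T1.
  by rewrite scaleNr subrr.
- by rewrite cardsD (setIidPr sT1T) cT1; lia.
Qed.

Lemma lemB N (f g : 'I_r -> 'rV[F]_N) ka kb (T : {set 'I_r}) (d : 'I_r -> F)
    (p q : 'rV[F]_N) :
  KR f ka -> KR g kb -> (1 < ka)%N -> (1 < kb)%N -> (#|T| <= ka + kb - 2)%N ->
  (forall j, j \in T -> d j != 0) ->
  (forall y z, \sum_(j in T) d j * f j 0 y * g j 0 z = p 0 y * q 0 z) ->
  (#|T| <= 1)%N.
Proof.
move=> hf hg ka2 kb2 hT hd E.
rewrite leqNgt; apply/negP => hT2.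
have [j0 hj0] : exists j0, j0 \in T by apply/card_gt0P; lia.
have [j1 hj1] : exists j1, j1 \in T :\ j0.
  by apply/card_gt0P; have := cardsD1 j0 T; rewrite hj0; lia.
move: hj1; rewrite !inE => /andP [hj10 hj1].
have c2 : #|T :\: [set j0; j1]| = (#|T| - 2)%N.
  rewrite cardsD (setIidPr _) ?cards2 1?eq_sym ?hj10 //.
  by rewrite subUset !sub1set hj0 hj1.
have [T1 [sT1 cT1]] := @sub_card _ (T :\: [set j0; j1]) (minn (ka - 2) (#|T| - 2)) ltac:(rewrite c2; lia).
have j0T1 : j0 \notin T1 by apply/negP => /(subsetP sT1); rewrite !inE eqxx.
have j1T1 : j1 \notin T1 by apply/negP => /(subsetP sT1); rewrite !inE eqxx orbT.
have sT1T : T1 \subset T by apply: subset_trans sT1 (subsetDl T _).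
have ind1 := hf (j0 |: (j1 |: T1)) ltac:(rewrite !cardsU1 j1T1 !inE negb_or eq_sym hj10 j0T1 cT1 /=; lia).
have hg' := hg (T :\: T1) ltac:(rewrite cardsD (setIidPr sT1T) cT1; lia).
have : ~~ (f j0 <= col_mx p (Fm f T1))%MS || ~~ (f j1 <= col_mx p (Fm f T1))%MS.
  rewrite -negb_and; apply/negP => /andP [/span_col [a0 [c0 h0]] /span_col [a1 [c1 h1]]].
  pose g0 := if a0 == 0 then 1 else a1; pose g1 := if a0 == 0 then 0 else - a0.
  have := ind1 (fun j => if j == j0 then g0 else if j == j1 then g1 else -(g0 * c0 j + g1 * c1 j)).
  have hj01 : (j1 == j0) = false by apply/negbTE.
  rewrite !big_setU1 /= ?eqxx ?hj01 ?(negbTE j1T1) ?inE ?negb_or ?j0T1 ?(eq_sym j0) ?hj10 //.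
  have hs : \sum_(j in T1) (if j == j0 then g0 else if j == j1 then g1
          else - (g0 * c0 j + g1 * c1 j)) *: f j
       = - (g0 *: \sum_(j in T1) c0 j *: f j + g1 *: \sum_(j in T1) c1 j *: f j).
    rewrite !scaler_sumr -big_split -sumrN /=; apply: eq_bigr => j hj.
    have -> : (j == j0) = false by apply/negP => /eqP e; rewrite -e hj in j0T1.
    have -> : (j == j1) = false by apply/negP => /eqP e; rewrite -e hj in j1T1.
    by rewrite !scalerA -scalerDl scaleNr.
  rewrite hs h0 h1.
  have hz : g0 * a0 + g1 * a1 = 0 by rewrite /g0 /g1; case: eqP => [->|_]; ring.
  move=> /(_ _) H.
  have H0 := H _ j0; have H1 := H _ j1.
  rewrite eqxx !inE eqxx /= in H0; rewrite hj01 eqxx !inE eqxx orbT /= in H1.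
  have Hs : g0 *: (a0 *: p + \sum_(j in T1) c0 j *: f j) +
     (g1 *: (a1 *: p + \sum_(j in T1) c1 j *: f j) -
      (g0 *: \sum_(j in T1) c0 j *: f j + g1 *: \sum_(j in T1) c1 j *: f j)) = 0.
    apply/rowP => i; rewrite !mxE; rewrite /g0 /g1.
    by case: eqP => [->|_]; ring.
  have A0 := H0 Hs; have A1 := H1 Hs; move: A1 A0; rewrite /g0 /g1.
  case: (a0 =P 0) => [_ _ /(_ isT) /eqP|/eqP ha /(_ isT) /eqP]; first by rewrite oner_eq0.
  by rewrite oppr_eq0 (negbTE ha).
case/orP => hn.
  exact: (core (f := f) (g := g) hd E sT1T hj0 j0T1 hn hg').
exact: (core (f := f) (g := g) hd E sT1T hj1 j1T1 hn hg').
Qed.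

End Gen.

Section KrGen.
Variables (F : fieldType) (p r : nat) (v : 'I_r -> 'rV[F]_p).

Lemma free_ind (A : {set 'I_r}) : free [seq v j | j in A] -> ind v A.
Proof.
move=> hf d hs j hj.
have hsz : (index j (enum A) < size [seq v j | j in A])%N.
  by rewrite size_map index_mem mem_enum.
have := (@freeP _ _ _ (in_tuple [seq v j | j in A]) hf)
   (fun i => d (nth j (enum A) i)) _ (Ordinal hsz).
rewrite /= nth_index ?mem_enum //; apply.
rewrite -[RHS]hs -[in RHS]big_enum /= [in RHS](big_nth j) [in RHS]big_mkord.
rewrite size_map; apply: eq_bigr => i _.
by rewrite (nth_map j) //.
Qed.

Lemma kr_le : (kruskal_rank v <= r)%N.
Proof. by apply/bigmax_leqP => i _; rewrite -ltnS. Qed.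

Lemma kr_KR : KR v (kruskal_rank v).
Proof.
rewrite /kruskal_rank.
set P := (fun k : 'I_r.+1 => [forall A : {set 'I_r}, (#|A| == k) ==> free [seq v j | j in A]]).
have hP : (0 < #|P|)%N.
  apply/card_gt0P; exists ord0; rewrite /P /=; apply/forallP => A.
  apply/implyP => /eqP /cards0_eq ->.
  by rewrite /image_mem enum_set0 nil_free.
have [i0 hi0 ->] := @eq_bigmax_cond _ P (fun k : 'I_r.+1 => nat_of_ord k) hP.
move=> T hT.
have [B [sB cB]] := @sub_card _ (~: T) (i0 - #|T|)
   ltac:(have := cardsC T; rewrite card_ord; have := ltn_ord i0; lia).
apply: (@ind_sub _ _ _ _ (T :|: B)); first exact: subsetUl.
apply: free_ind; move/forallP: hi0 => /(_ (T :|: B)) /implyP; apply.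
rewrite cardsU cB.
have -> : #|T :&: B| = 0%N.
  apply/eqP; rewrite cards_eq0; apply/eqP/setP => x; rewrite !inE.
  by apply/negP => /andP [h1 h2]; move: (subsetP sB x h2); rewrite inE h1.
apply/eqP; lia.
Qed.

Lemma kr_ge1 : (0 < r)%N -> (forall j, v j != 0) -> (0 < kruskal_rank v)%N.
Proof.
move=> hr hv; rewrite /kruskal_rank.
have h1 : (1 < r.+1)%N by [].
apply: (leq_trans _ (@leq_bigmax_cond _ _ (fun k : 'I_r.+1 => nat_of_ord k) (Ordinal h1) _)) => //.
apply/forallP => A; apply/implyP => /cards1P [x ->].
by rewrite /image_mem enum_set1 /= seq1_free.
Qed.

End KrGen.

Section Tens.
Variables (R : realType) (m : nat) (n : 'I_m -> nat) (r : nat).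
Local Notation C := (R[i]).

Definition X := {dffun forall k : 'I_m, 'I_(n k)}.
Local Notation N := #|X|.
Definition ev (i : 'I_N) : X := enum_val i.
Definition vf (w : vtuple R n) (G : {set 'I_m}) (a : mindex n) : C :=
  \prod_(k in G) w k 0 (a k).
Definition vec (G : {set 'I_m}) (w : vtuple R n) : 'rV[C]_N :=
  \row_i vf w G (ev i).
Definition mix (G : {set 'I_m}) (x y : X) : X :=
  [ffun k => if k \in G then x k else y k].

Lemma vec_rank (G : {set 'I_m}) w (x : X) : vec G w 0 (enum_rank x) = vf w G x.
Proof. by rewrite mxE /ev enum_rankK. Qed.

Lemma vf_mix1 (G : {set 'I_m}) w (x y : X) : vf w G (mix G x y) = vf w G x.
Proof. by apply: eq_bigr => k hk; rewrite ffunE hk. Qed.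

Lemma vf_mix2 (G G2 : {set 'I_m}) w (x y : X) : [disjoint G & G2] -> vf w G2 (mix G x y) = vf w G2 y.
Proof.
move=> dis; apply: eq_bigr => k hk; rewrite ffunE.
by have -> : (k \in G) = false by apply/negP => hk'; move: (disjointFr dis hk'); rewrite hk.
Qed.

Lemma vf_U (G1 G2 : {set 'I_m}) w (a : mindex n) : [disjoint G1 & G2] ->
  vf w (G1 :|: G2) a = vf w G1 a * vf w G2 a.
Proof. by move=> dis; rewrite /vf -bigU //; apply: eq_bigl => k; rewrite !inE. Qed.


Lemma surj (x0 : X) k (a : 'I_(n k)) : exists x : X, x k = a.
Proof.
have : forall k', exists i : 'I_(n k'), k' = k -> nat_of_ord i = nat_of_ord a.
  move=> k'; case: (eqVneq k' k) => [->|ne]; first by exists a.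
  by exists (x0 k') => e; rewrite e eqxx in ne.
move=> H; have [fx hfx] := fin_all_exists H.
exists (finfun fx : X); rewrite ffunE; apply: val_inj => /=; exact: hfx.
Qed.

Variable (u : 'I_r -> vtuple R n).

Lemma KR_single k K (x0 : X) :
  KR (fun j => u j k) K -> KR (fun j => vec [set k] (u j)) K.
Proof.
move=> h T hT d hs; apply: (h T hT d); apply/rowP => a.
have [x hx] := surj x0 a.
have := congr1 (fun M : 'M_(1,N) => M 0 (enum_rank x)) hs.
rewrite !summxE !mxE => H; apply: (etrans _ H); apply: eq_bigr => j _.
by rewrite !mxE /ev enum_rankK /vf big_set1 hx.
Qed.

Lemma KR_empty (x0 : X) : KR (fun j => vec set0 (u j)) 1.
Proof.
move=> T hT d hs j hj.
rewrite (big_setD1 j hj) /= big1 ?addr0 in hs; last first.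
  move=> i; have := cardsD1 j T; rewrite hj => hc.
  have /cards0_eq -> : #|T :\ j| = 0%N by lia.
  by rewrite inE.
have := congr1 (fun M : 'M_(1,N) => M 0 (enum_rank x0)) hs.
by rewrite !mxE /ev enum_rankK /vf big_set0 mulr1.
Qed.

Lemma KRprod (G1 G2 : {set 'I_m}) ka kb : [disjoint G1 & G2] ->
  KR (fun j => vec G1 (u j)) ka -> KR (fun j => vec G2 (u j)) kb ->
  (0 < ka)%N -> (0 < kb)%N -> KR (fun j => vec (G1 :|: G2) (u j)) (ka + kb - 1).
Proof.
move=> dis hf hg ka0 kb0 T hT d hs j hj.
apply/eqP; apply/negPn/negP => hdj.
set T' := [set i in T | d i != 0].
have sT' : T' \subset T by apply/subsetP => x; rewrite inE => /andP [].
have := @lemA _ _ _ _ _ ka kb T' d hf hg ka0 kb0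
   (leq_trans (subset_leq_card sT') hT) _ _.
have hjT' : j \in T' by rewrite inE hj hdj.
move=> H; suff: T' = set0 by move=> e; rewrite e inE in hjT'.
apply: H.
  by move=> i; rewrite inE => /andP [].
move=> y z.
have := congr1 (fun M : 'M_(1,N) => M 0 (enum_rank (mix G1 (ev y) (ev z)))) hs.
rewrite !summxE !mxE => H; apply: (etrans _ H).
rewrite big_mkcond [RHS]big_mkcond /=; apply: eq_bigr => i _.
rewrite !mxE /ev enum_rankK vf_U // vf_mix1 vf_mix2 // inE.
case: (i \in T) => //=; case: eqP => [->|_] /=; first by rewrite !mul0r.
by rewrite -mulrA.
Qed.

Lemma KR_G (x0 : X) (ku : 'I_m -> nat) :
  (forall k, KR (fun j => u j k) (ku k)) -> (forall k, 0 < ku k)%N ->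
  forall G, KR (fun j => vec G (u j)) (\sum_(k in G) ku k + 1 - #|G|).
Proof.
move=> hk hk1 G.
have hS : forall G : {set 'I_m}, (#|G| <= \sum_(k in G) ku k)%N.
  by move=> H; rewrite -sum1_card; apply: leq_sum => i _.
suff: forall t (G : {set 'I_m}), #|G| = t -> KR (fun j => vec G (u j)) (\sum_(k in G) ku k + 1 - #|G|).
  by move/(_ _ G erefl).
elim=> [|t IH] {}G hG.
  move/cards0_eq: hG => ->; rewrite big_set0 cards0; exact: KR_empty.
have [k hk0] : exists k, k \in G by apply/card_gt0P; rewrite hG.
have hG' : #|G :\ k| = t by have := cardsD1 k G; rewrite hk0; lia.
have hkG' : k \notin G :\ k by rewrite !inE eqxx.
rewrite -(setD1K hk0).
have := KRprod (G1 := [set k]) (G2 := G :\ k) _ (KR_single x0 (hk k)) (IH _ hG') (hk1 k) _.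
rewrite disjoints1 hkG' => /(_ isT).
have := hS (G :\ k); rewrite hG' => hs.
have h2 : (0 < \sum_(i in G :\ k) ku i + 1 - t)%N by lia.
move=> /(_ h2) H; apply: (KR_le H).
rewrite big_setU1 //= cardsU1 hkG' hG'; lia.
Qed.

End Tens.

Section Main.
Variables (R : realType) (m : nat) (n : 'I_m -> nat).
Local Notation C := (R[i]).
Local Notation X := (X n).
Local Notation N := #|X|.
Local Notation vf := (@vf R m n).
Local Notation vec := (@vec R m n).
Local Notation ev := (@ev m n).

Lemma prodT (F : 'I_m -> C) : \prod_(k in [set: 'I_m]) F k = \prod_k F k.
Proof. by apply: eq_bigl => k; rewrite in_setT. Qed.

Lemma vf_ffun w G (a : mindex n) : vf w G (finfun a : X) = vf w G a.
Proof. by apply: eq_bigr => k _; rewrite ffunE. Qed.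

Lemma hprod_vf (w : vtuple R n) a b :
  hprod w a b = vf w setT a * Num.conj (vf w setT b).
Proof. by rewrite /hprod /vf !prodT big_split /= rmorph_prod. Qed.

Definition VM r' (w : 'I_r' -> vtuple R n) : 'M[C]_(r', N) := \matrix_j vec setT (w j).
Definition CM r' (lam : 'I_r' -> R) (w : 'I_r' -> vtuple R n) : 'M[C]_(N, r') :=
  \matrix_(y, j) ((lam j)%:C * Num.conj (vf (w j) setT (ev y))).
Definition HM (H : htensor R n) : 'M[C]_N := \matrix_(y, z) H (ev z) (ev y).

Lemma HM_sum r' (lam : 'I_r' -> R) w : HM (hsum lam w) = CM lam w *m VM w.
Proof.
apply/matrixP => y z; rewrite !mxE /hsum; apply: eq_bigr => j _.
by rewrite !mxE hprod_vf; ring.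
Qed.

Lemma row_free_ind r' (f : 'I_r' -> 'rV[C]_N) : ind f setT -> row_free (\matrix_j f j).
Proof.
move=> h; apply/inj_row_free => v hv; apply/rowP => j; rewrite mxE.
apply: (h (fun j => v 0 j)) _ j (in_setT j).
rewrite -[RHS]hv mulmx_sum_row; apply: eq_big => i; first by rewrite in_setT.
by rewrite rowK.
Qed.

Lemma nz_point (w : vtuple R n) : (forall k, w k != 0) ->
  exists x : X, forall k, w k 0 (x k) != 0.
Proof.
move=> hw.
have H : forall k, exists i : 'I_(n k), w k 0 i != 0 by move=> k; apply/rV0Pn.
have [fx hfx] := fin_all_exists H.
by exists (finfun fx : X) => k; rewrite ffunE.
Qed.

Lemma vf_nz (w : vtuple R n) (x : X) G : (forall k, w k 0 (x k) != 0) -> vf w G x != 0.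
Proof. by move=> h; apply/prodf_neq0 => k _. Qed.


Lemma conjR (x : R) : Num.conj (x%:C : C) = x%:C.
Proof. exact: conjc_real. Qed.

Lemma eqC0 (x : R) : (x%:C == 0 :> C) = (x == 0).
Proof. by rewrite -complexr0 eq_complex /= eqxx andbT. Qed.

Lemma rankH r (lam : 'I_r -> R) (u : 'I_r -> vtuple R n) :
  ind (fun j => vec setT (u j)) setT -> (forall j, lam j != 0) ->
  \rank (HM (hsum lam u)) = r.
Proof.
move=> hind hlam; rewrite HM_sum mxrankMfree; last exact: row_free_ind.
rewrite -mxrank_tr.
have -> : (CM lam u)^T = \matrix_j (\row_y ((lam j)%:C * Num.conj (vf (u j) setT (ev y)))).
  by apply/matrixP => j y; rewrite !mxE.
apply/eqP; apply: row_free_ind => d hs j _.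
have H : \sum_(j in setT) (Num.conj (d j) * (lam j)%:C) *: vec setT (u j) = 0.
  apply/rowP => z.
  transitivity (Num.conj ((\sum_(j in setT) d j *:
     (\row_y ((lam j)%:C * Num.conj (vf (u j) setT (ev y))) : 'rV[C]_N)) 0 z)).
    rewrite !summxE rmorph_sum; apply: eq_bigr => i _.
    by rewrite !mxE !rmorphM /= conjCK conjR; ring.
  by rewrite hs !mxE rmorph0.
have /eqP := hind _ H j (in_setT j).
by rewrite mulf_eq0 conjC_eq0 eqC0 (negbTE (hlam j)) orbF => /eqP.
Qed.


Lemma scale_fac (w v : vtuple R n) (al : C) :
  (forall x : X, vf w setT x = al * vf v setT x) -> (forall k, v k != 0) ->
  (exists x : X, vf w setT x != 0) -> forall k, exists c : C, w k = c *: v k.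
Proof.
move=> hx hv [x1 hx1] k.
have [xv hxv] := nz_point hv.
pose G := [set k].
have dis : [disjoint G & ~: G] by rewrite disjoints_subset setCK.
have hsplit : forall (t : vtuple R n) (x : X), vf t setT x = t k 0 (x k) * vf t (~: G) x.
  by move=> t x; rewrite -(setUCr G) vf_U // /vf big_set1.
have al0 : al != 0.
  by apply/negP => /eqP e; move: hx1; rewrite hx e mul0r eqxx.
pose Pw := vf w (~: G) xv; pose Pv := vf v (~: G) xv.
have Pv0 : Pv != 0 by apply: vf_nz.
have Pw0 : Pw != 0.
  apply/negP => /eqP e; have := hx xv; rewrite !hsplit -/Pw -/Pv e mulr0 => /esym/eqP.
  by rewrite !mulf_eq0 (negbTE al0) (negbTE Pv0) (negbTE (hxv k)).
exists (al * Pv / Pw); apply/rowP => a; rewrite mxE.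
have [y hy] := surj xv a.
have := hx (mix G y xv); rewrite !hsplit !vf_mix2 // ffunE inE eqxx hy -/Pw -/Pv.
by move=> e; apply: (mulIf Pw0); rewrite e; field.
Qed.


Lemma prod_span r (u : 'I_r -> vtuple R n) (x0 : X) (ku : 'I_m -> nat) k0 :
  (forall k, KR (fun j => u j k) (ku k)) -> (forall k, 0 < ku k)%N ->
  (forall k, ku k <= r)%N -> (r + m <= \sum_(k < m) ku k)%N -> (1 < ku k0)%N ->
  forall (w : vtuple R n) (D : 'I_r -> C),
  vec setT w = \sum_j D j *: vec setT (u j) -> vec setT w != 0 ->
  exists j0, forall j, j != j0 -> D j = 0.
Proof.
move=> hk hk1 hkr hsum hk0 w D hw hw0.
pose G1 := [set k0]; pose G2 := ~: G1.
have dis : [disjoint G1 & G2] by rewrite disjoints_subset setCK.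
pose T := [set j | D j != 0].
have hT : (#|T| <= 1)%N.
  have hf := KR_single x0 (hk k0).
  have hg := @KR_G _ _ _ _ u x0 ku hk hk1 G2.
  have hS : \sum_(k < m) ku k = (ku k0 + \sum_(k in G2) ku k)%N.
    by rewrite (bigD1 k0) //=; congr (_ + _)%N; apply: eq_bigl => k; rewrite !inE.
  have cG2 : #|G2| = m.-1 by rewrite cardsC1 card_ord.
  have cT : (#|T| <= r)%N by rewrite -[X in (_ <= X)%N]card_ord max_card.
  have hkr0 := hkr k0.
  apply: (lemB (p := vec G1 w) (q := vec G2 w) (d := D) hf hg hk0).
  - rewrite cG2; move: hS hsum hkr0; set S := \sum_(k in G2) ku k; set S0 := \sum_(k < m) ku k; have := ltn_ord k0; lia.
  - rewrite cG2; move: hS hsum hkr0 cT; set S := \sum_(k in G2) ku k; set S0 := \sum_(k < m) ku k; have := ltn_ord k0; move: (#|T|) => t; clear; lia.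
  - by move=> j; rewrite inE.
  move=> y z.
  have := congr1 (fun M : 'M_(1,N) => M 0 (enum_rank (mix G1 (ev y) (ev z)))) hw.
  rewrite summxE mxE /ev enum_rankK -/(ev y) -/(ev z).
  under eq_bigr do rewrite !mxE /ev enum_rankK -/(ev y) -/(ev z) -(setUCr G1) (vf_U _ _ dis) vf_mix1 (vf_mix2 _ _ _ dis).
  rewrite -(setUCr G1) (vf_U _ _ dis) vf_mix1 (vf_mix2 _ _ _ dis) !mxE => ->.
  rewrite big_mkcond /=; apply: eq_bigr => j _; rewrite inE !mxE.
  by case: eqP => [->|_]; rewrite ?mul0r //= mulrA.
case: (set_0Vmem T) => [T0 | [j0 hj0]].
  move: hw0; rewrite hw big1 ?eqxx // => j _.
  have : j \notin T by rewrite T0 inE.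
  by rewrite inE negbK => /eqP ->; rewrite scale0r.
exists j0 => j hj; apply/eqP; apply/negPn/negP => hDj.
have : (#|[set j; j0]| <= #|T|)%N.
  by apply: subset_leq_card; rewrite subUset !sub1set hj0 inE hDj.
by rewrite cards2 hj; lia.
Qed.

End Main.

Unset Implicit Arguments. Set Strict Implicit.

Theorem proposition2p5 (R : realType) (m : nat) (n : 'I_m -> nat) (r : nat)
    (lam : 'I_r -> R) (u : 'I_r -> vtuple R n) :
  (1 < m)%N ->
  (forall j, lam j != 0) ->
  (forall j k, u j k != 0) ->
  (r + m <= \sum_(k < m) kruskal_rank (fun j => u j k))%N ->
  hrank_is (hsum lam u) r /\
  (forall (mu : 'I_r -> R) (w : 'I_r -> vtuple R n),
     hsum lam u = hsum mu w ->
     exists s : {perm 'I_r}, forall j,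
       (forall a b, (mu (s j))%:C * hprod (w (s j)) a b = (lam j)%:C * hprod (u j) a b) /\
       (forall k, exists c : complex R, w (s j) k = c *: u j k)).
Proof.
move=> hm hlam hu hS0.
pose ku := fun k => kruskal_rank (fun j => u j k).
have hsum' : (r + m <= \sum_(k < m) ku k)%N := hS0.
have kuKR : forall k, KR (fun j => u j k) (ku k) := fun k => kr_KR (v := fun j => u j k).
have kule : forall k, (ku k <= r)%N := fun k => kr_le (fun j => u j k).
have r2 : (1 < r)%N.
  have : (\sum_(k < m) ku k <= \sum_(k < m) r)%N by apply: leq_sum => k _; exact: kule.
  rewrite sum_nat_const card_ord; move: hsum'; move: (\sum_(k < m) ku k) => S.
  move=> h1 h2; nia.
have r0 : (0 < r)%N by lia.
have ku1 : forall k, (0 < ku k)%N := fun k => kr_ge1 r0 (fun j => hu j k).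
pose j0 : 'I_r := Ordinal r0.
have [x0 _] := nz_point (hu j0).
have sT : \sum_(k in [set: 'I_m]) ku k = \sum_(k < m) ku k.
  by apply: eq_bigl => k; rewrite in_setT.
have KRfull : KR (fun j => vec setT (u j)) r.
  apply: (KR_le (@KR_G _ _ _ _ u x0 ku kuKR ku1 setT)).
  rewrite cardsT card_ord sT; move: hsum'; move: (\sum_(k < m) ku k) => S; lia.
have indU : ind (fun j => vec setT (u j)) setT by apply: KRfull; rewrite cardsT card_ord.
have rk := rankH indU hlam.
split.
  split; first by exists lam, u.
  move=> r' [mu [w hw]]; rewrite -rk hw HM_sum.
  exact: leq_trans (mxrankM_maxr _ _) (rank_leq_row _).
move=> mu w hw.
have hW : HM (hsum lam u) = CM mu w *m VM w by rewrite hw HM_sum.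
have hU : HM (hsum lam u) = CM lam u *m VM u := HM_sum _ _.
have rkW : \rank (VM w) = r.
  apply/eqP; rewrite eqn_leq rank_leq_row /= -{1}rk hW; exact: mxrankM_maxr.
have fW : row_free (VM w) by rewrite /row_free rkW.
have sWU : (VM w <= VM u)%MS.
  have sHW : (HM (hsum lam u) <= VM w)%MS by rewrite hW submxMl.
  have e2 : (VM w <= HM (hsum lam u))%MS by rewrite -(mxrank_leqif_sup sHW).2 rk rkW.
  by apply: submx_trans e2 _; rewrite hU submxMl.
have hrow : forall i, exists D : 'I_r -> R[i], vec setT (w i) = \sum_j D j *: vec setT (u j).
  move=> i; have := submx_trans (row_sub i (VM w)) sWU.
  case/submxP => D hD; exists (fun j => D 0 j).
  move: hD; rewrite rowK => ->; rewrite mulmx_sum_row; apply: eq_bigr => j _.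
  by rewrite rowK.
have nzW : forall i, vec setT (w i) != 0.
  move=> i; apply/negP => /eqP h0.
  have : delta_mx (0 : 'I_1) i *m VM w = 0 *m VM w by rewrite -rowE rowK h0 mul0mx.
  move/(row_free_inj fW) => /matrixP /(_ 0 i); rewrite !mxE !eqxx /=.
  by apply/eqP; exact: oner_neq0.
have [k0 hk0] : exists k0, (1 < ku k0)%N.
  case: (pickP (fun k => 1 < ku k)%N) => [k hk|h]; first by exists k.
  have : (\sum_(k < m) ku k <= \sum_(k < m) 1)%N.
    by apply: leq_sum => k _; have := h k; rewrite /= ltnNge => /negbFE.
  rewrite sum_nat_const card_ord muln1; move: hsum'; move: (\sum_(k < m) ku k) => S; lia.
have hsig : forall i, exists p : 'I_r * R[i], vec setT (w i) = p.2 *: vec setT (u p.1).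
  move=> i; have [D hD] := hrow i.
  have [j1 hj1] := prod_span x0 kuKR ku1 kule hsum' hk0 hD (nzW i).
  exists (j1, D j1) => /=; rewrite hD (bigD1 j1) //= big1 ?addr0 // => j hj.
  by rewrite hj1 ?scale0r.
have [sa hsa] := fin_all_exists hsig.
pose sig i := (sa i).1; pose al i := (sa i).2.
have hvf : forall i (x : X n), vf (w i) setT x = al i * vf (u (sig i)) setT x.
  move=> i x; have := congr1 (fun M : 'M_(1, #|X n|) => M 0 (enum_rank x)) (hsa i).
  by rewrite !mxE /ev enum_rankK.
pose e j := (lam j)%:C - \sum_(i | sig i == j) (mu i)%:C * al i * Num.conj (al i).
have he : forall y z : 'I_#|X n|, \sum_j e j * Num.conj (vf (u j) setT (ev y)) * vf (u j) setT (ev z) = 0.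
  move=> y z.
  have H : \sum_j (lam j)%:C * Num.conj (vf (u j) setT (ev y)) * vf (u j) setT (ev z)
         = \sum_j (mu j)%:C * Num.conj (vf (w j) setT (ev y)) * vf (w j) setT (ev z).
    transitivity ((CM lam u *m VM u) y z).
      by rewrite mxE; apply: eq_bigr => j _; rewrite !mxE.
    by rewrite -hU hW mxE; apply: eq_bigr => j _; rewrite !mxE.
  pose A j := Num.conj (vf (u j) setT (ev y)) * vf (u j) setT (ev z).
  have H1 : \sum_j (lam j)%:C * A j =
            \sum_i ((mu i)%:C * al i * Num.conj (al i)) * A (sig i).
    transitivity (\sum_j (lam j)%:C * Num.conj (vf (u j) setT (ev y)) * vf (u j) setT (ev z)).
      by apply: eq_bigr => j _; rewrite /A; ring.
    rewrite H; apply: eq_bigr => i _; rewrite /A !hvf rmorphM /=; ring.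
  rewrite (eq_bigr (fun j => e j * A j)); last by move=> j _; rewrite /A mulrA.
  rewrite /e; under eq_bigr do rewrite mulrBl; rewrite sumrB H1; apply/eqP; rewrite subr_eq0; apply/eqP.
  rewrite (partition_big sig xpredT) //=; apply: eq_bigr => j _; rewrite mulr_suml.
  by apply: eq_bigr => i /eqP <-.
have e0 : forall j, e j = 0.
  move=> j; have [xj hxj] := nz_point (hu j).
  have hs : \sum_(j' in setT) (e j' * Num.conj (vf (u j') setT xj)) *: vec setT (u j') = 0.
    apply/rowP => z; rewrite summxE mxE.
    transitivity (\sum_j' e j' * Num.conj (vf (u j') setT (ev (enum_rank xj))) * vf (u j') setT (ev z)).
      apply: eq_big => j'; first by rewrite in_setT.
      by move=> _; rewrite !mxE /ev enum_rankK.
    exact: he.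
  have := indU _ hs j (in_setT j).
  by move/eqP; rewrite mulf_eq0 conjC_eq0 (negbTE (vf_nz _ hxj)) orbF => /eqP.
have surj : forall j, exists i, sig i = j.
  move=> j; case: (pickP (fun i => sig i == j)) => [i /eqP hi | h]; first by exists i.
  have := e0 j; rewrite /e big_pred0 // subr0 => /eqP.
  by rewrite eqC0 (negbTE (hlam j)).
have [g hg] := fin_all_exists surj.
have ginj : injective g := can_inj hg.
have gs : forall i, g (sig i) = i.
  by move=> i; case: (injF_bij ginj) => g' gK g'K; rewrite -{1}(g'K i) hg g'K.
exists (perm ginj) => j; rewrite permE.
have hsi : sig (g j) = j := hg j.
have ej := e0 j.
rewrite /e (big_pred1 (g j)) in ej; last first.
  by move=> i'; rewrite /= ; apply/eqP/eqP => [<-|->]; [rewrite gs | rewrite hg].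
have hl : (lam j)%:C = (mu (g j))%:C * al (g j) * Num.conj (al (g j)).
  by apply/eqP; rewrite -subr_eq0 ej.
split.
  move=> a b; rewrite !hprod_vf.
  rewrite -(vf_ffun (w (g j)) setT a) -(vf_ffun (w (g j)) setT b) !hvf hsi !vf_ffun.
  by rewrite hl rmorphM /=; ring.
move=> k; apply: (scale_fac (al := al (g j))).
- by move=> x; rewrite hvf hsi.
- exact: hu.
- have /rV0Pn [t ht] := nzW (g j); exists (ev t); move: ht; rewrite mxE.
  done.
Qed.
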